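(* Let $G$ be a graph with $\alpha(G)\geq d\geq 2$ and let $v$ be a vertex of $G$. Write $\mathrm{del}(v)=\{\tau\in\Delta_d^t(G): v\notin\tau\}$. (a) If $\alpha(G-v)\leq d-1$, then $\mathrm{del}(v)=\Delta_d^t(G)=\Delta^{N_G(v)}*\Delta_{d-1}^t(G-N_G[v])$. (b) If $\alpha(G-N_G[v])\leq d-2$, then $\mathrm{del}(v)=\Delta_d^t(G-v)$. (c) If $\alpha(G-v)\geq d$ and $\alpha(G-N_G[v])\geq d-1$, then $$\mathrm{del}(v)=\Delta_d^t(G-v)\cup\left(\Delta^{N_G(v)}*\Delta_{d-1}^t(G-N_G[v])\right).$$
   Context: All graphs are finite and simple; $\alpha(G)$ is the independence number, $G[S]$ the induced subgraph on $S$, $G-S=G[V(G)\setminus S]$, $N_G(v)$ the open and $N_G[v]=N_G(v)\cup\{v\}$ the closed neighborhood. For any integer $e\ge1$, $\Delta_e^t(H)=\{\sigma\subseteq V(H):\ \alpha(H[V(H)\setminus\sigma])\geq e\}$. $\Delta^X=\mathcal{P}(X)$ is the full simplex on $X$ (with $\Delta^\emptyset=\{\emptyset\}$), and for complexes on disjoint vertex sets the join is $K*J=\{\tau\cup\sigma:\tau\in K,\sigma\in J\}$. Complexes are compared as families of subsets of $V(G)$. *)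

(* Defs.v *)
(* A simple graph G is given by a finite vertex type T and an
   adjacency relation e : rel T, assumed symmetric and irreflexive.
   Induced subgraphs G[S] are represented by their vertex set S : {set T}. *)
From mathcomp Require Import all_boot.
Set Implicit Arguments. Unset Strict Implicit. Unset Printing Implicit Defensive.

Section Graph.
Variables (T : finType) (e : rel T).

Definition independent (I : {set T}) : bool :=
  [forall x in I, forall y in I, ~~ e x y].

Definition alpha_on (S : {set T}) : nat :=
  \max_(I : {set T} | (I \subset S) && independent I) #|I|.

Definition tcomplex (S : {set T}) (k : nat) : {set {set T}} :=
  [set sigma : {set T} | (sigma \subset S) && (k <= alpha_on (S :\: sigma))].

Definition nbhd (v : T) : {set T} := [set u | e v u].
Definition cnbhd (v : T) : {set T} := v |: nbhd v.

Definition fullsimplex (X : {set T}) : {set {set T}} := powerset X.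

Definition cjoin (K J : {set {set T}}) : {set {set T}} :=
  [set tau :|: sigma | tau in K, sigma in J].

Definition del_v (d : nat) (v : T) : {set {set T}} :=
  [set tau in tcomplex setT d | v \notin tau].

End Graph.

(* Main.v *)
Require Import Defs.
From mathcomp Require Import all_boot.
Set Implicit Arguments. Unset Strict Implicit. Unset Printing Implicit Defensive.


Lemma alphaP (T : finType) (e : rel T) (S : {set T}) k :
  reflect (exists I : {set T}, [/\ I \subset S, independent e I & k <= #|I|])
          (k <= alpha_on e S).
Proof.
apply: (iffP idP).
- rewrite /alpha_on.
  have [|I0 HI0 ->] := eq_bigmax_cond (fun I : {set T} => #|I|)
     (A := fun I : {set T} => (I \subset S) && independent e I).
    apply/card_gt0P; exists set0; rewrite /in_mem /= sub0set /independent.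
    by apply/forallP => x; rewrite in_set0.
  by move: HI0 => /andP[H1 H2] Hk; exists I0.
- case=> I [H1 H2 H3]; apply: leq_trans H3 _.
  exact: (@leq_bigmax_cond _ (fun I : {set T} => (I \subset S) && independent e I) (fun I : {set T} => #|I|) I (introT andP (conj H1 H2))).
Qed.

Lemma alpha_mono (T : finType) (e : rel T) (S S' : {set T}) : S \subset S' -> alpha_on e S <= alpha_on e S'.
Proof.
move=> sS; apply/alphaP; have /alphaP [I [H1 H2 H3]] := leqnn (alpha_on e S).
by exists I; split=> //; apply: subset_trans sS.
Qed.

Lemma indep_sub (T : finType) (e : rel T) (I J : {set T}) : J \subset I -> independent e I -> independent e J.
Proof.
move=> sJ /forallP H; apply/forallP => x; apply/implyP => xJ.
have /implyP/(_ (subsetP sJ _ xJ))/forallP H' := H x.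
apply/forallP => y; apply/implyP => yJ.
exact: (implyP (H' y) (subsetP sJ _ yJ)).
Qed.

Lemma indepP (T : finType) (e : rel T) (I : {set T}) :
  reflect (forall x y, x \in I -> y \in I -> ~~ e x y) (independent e I).
Proof.
apply: (iffP forallP).
- move=> H x y xI yI; have /implyP/(_ xI)/forallP H' := H x.
  exact: (implyP (H' y) yI).
- move=> H x; apply/implyP => xI; apply/forallP => y; apply/implyP => yI.
  exact: H.
Qed.

Lemma join_mem (T : finType) (e : rel T) (e_sym : symmetric e) (e_irr : irreflexive e) (v : T) k (s : {set T}) :
  (s \in cjoin (fullsimplex (nbhd e v)) (tcomplex e (~: cnbhd e v) k)) =
  (v \notin s) && (k <= alpha_on e (~: cnbhd e v :\: s)).
Proof.
apply/idP/idP.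
- case/imset2P => t r; rewrite /fullsimplex inE => tN; rewrite inE => /andP[rN Hk] ->.
  have eqS : ~: cnbhd e v :\: (t :|: r) = ~: cnbhd e v :\: r.
    apply/setP => x; rewrite !inE; case xt: (x \in t) => //=.
    by have := subsetP tN x xt; rewrite inE => ->; rewrite orbT andbF.
  rewrite eqS Hk andbT inE negb_or; apply/andP; split.
    apply/negP => /(subsetP tN); by rewrite inE e_irr.
  by apply/negP => /(subsetP rN); rewrite /cnbhd !inE eqxx.
- case/andP => vs Hk; apply/imset2P.
  exists (s :&: nbhd e v) (s :&: ~: cnbhd e v).
  + by rewrite /fullsimplex inE subsetIr.
  + rewrite inE subsetIr /=; apply: leq_trans Hk _; apply: alpha_mono.
    by apply/subsetP => x; rewrite !inE; case: (x \in s).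
  + apply/setP => x; rewrite /cnbhd !inE.
    case xs: (x \in s) => //=.
    by case: eqP => [xv|]; [by move: vs; rewrite -xv xs | by case: (e v x)].
Qed.

Lemma extend (T : finType) (e : rel T) (e_sym : symmetric e) (e_irr : irreflexive e) (v : T) k (s : {set T}) : v \notin s -> k <= alpha_on e (~: cnbhd e v :\: s) ->
  k.+1 <= alpha_on e (setT :\: s).
Proof.
move=> vs /alphaP [I [IS Ii Ik]]; apply/alphaP; exists (v |: I); split.
- apply/subsetP => x; rewrite !inE => /orP[/eqP->|/(subsetP IS)]; first by rewrite vs.
  by rewrite !inE => /andP[-> _].
- apply/indepP => x y; rewrite !inE.
  have vI : forall z, z \in I -> ~~ e v z.
    by move=> z /(subsetP IS); rewrite !inE; case: (e v z); rewrite ?orbT ?andbF.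
  move=> /orP[/eqP->|xI] /orP[/eqP->|yI].
  + by rewrite e_irr.
  + exact: vI.
  + by rewrite e_sym; apply: vI.
  + exact: (indepP _ _ Ii).
- have vI : v \notin I.
    apply/negP => /(subsetP IS). by rewrite !inE eqxx andbF.
  by rewrite (cardsU1 v I) vI.
Qed.

Lemma vsplit (T : finType) (e : rel T) (e_sym : symmetric e) (e_irr : irreflexive e) (v : T) k (s : {set T}) : v \notin s -> k.+1 <= alpha_on e (setT :\: s) ->
  k.+1 <= alpha_on e ((setT :\ v) :\: s) \/ k <= alpha_on e (~: cnbhd e v :\: s).
Proof.
move=> vs /alphaP [I [IS Ii Ik]].
case vI: (v \in I).
- right; apply/alphaP; exists (I :\ v); split.
  + apply/subsetP => x; rewrite /cnbhd !inE => /andP[xv xI].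
    have xs : x \notin s by move: (subsetP IS x xI); rewrite !inE andbT.
    rewrite xs (negbTE xv) /=.
    exact: (indepP _ _ Ii v x vI xI).
  + by apply: indep_sub Ii; apply: subsetDl.
  + by move: Ik; rewrite (cardsD1 v I) vI.
- left; apply/alphaP; exists I; split => //.
  apply/subsetP => x xI; have xs : x \notin s by move: (subsetP IS x xI); rewrite !inE andbT.
  rewrite !inE xs andbT; apply/negP => /eqP xv; move: vI; by rewrite -xv xI.
Qed.

Unset Implicit Arguments.
Theorem mainTheorem19 (T : finType) (e : rel T)
  (e_sym : symmetric e) (e_irr : irreflexive e) (d : nat) (v : T) :
  2 <= d -> d <= alpha_on e setT ->
  (* (a) *)
  (alpha_on e (setT :\ v) <= d.-1 ->
     del_v e d v = tcomplex e setT d /\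
     tcomplex e setT d =
       cjoin (fullsimplex (nbhd e v)) (tcomplex e (~: cnbhd e v) d.-1)) /\
  (* (b) *)
  (alpha_on e (~: cnbhd e v) <= d - 2 ->
     del_v e d v = tcomplex e (setT :\ v) d) /\
  (* (c) *)
  (d <= alpha_on e (setT :\ v) -> d.-1 <= alpha_on e (~: cnbhd e v) ->
     del_v e d v =
       tcomplex e (setT :\ v) d
       :|: cjoin (fullsimplex (nbhd e v)) (tcomplex e (~: cnbhd e v) d.-1)).
Proof.
move=> d2 _.
have memT : forall s, (s \in tcomplex e setT d) = (d <= alpha_on e (setT :\: s)).
  by move=> s; rewrite inE subsetT.
have memTv : forall s, (s \in tcomplex e (setT :\ v) d) =
    (v \notin s) && (d <= alpha_on e ((setT :\ v) :\: s)).
  move=> s; rewrite inE; congr (_ && _); apply/subsetP/idP.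
    by move=> H; apply/negP => /H; rewrite !inE eqxx.
  by move=> vs x xs; rewrite !inE andbT; apply/negP => /eqP xv; move: vs; rewrite -xv xs.
have memD : forall s, (s \in del_v e d v) = (v \notin s) && (d <= alpha_on e (setT :\: s)).
  by move=> s; rewrite !inE subsetT andbC.
have monoT : forall s, alpha_on e ((setT :\ v) :\: s) <= alpha_on e (setT :\: s).
  by move=> s; apply: alpha_mono; apply/subsetP => x; rewrite !inE => /andP[-> _].
case: d d2 memT memTv memD => [|[|k]] // _ memT memTv memD.
rewrite /= ?subSS ?subn0.
split; [move=> H|split; [move=> H|move=> _ _]].
- have vnot : forall s, k.+2 <= alpha_on e (setT :\: s) -> v \notin s.
    move=> s h; apply/negP => vs.
    have : alpha_on e (setT :\: s) <= alpha_on e (setT :\ v).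
      apply: alpha_mono; apply/subsetP => x; rewrite !inE !andbT => xs.
      by apply/negP => /eqP xv; move: xs; rewrite xv vs.
    by move=> h2; have := leq_trans h (leq_trans h2 H); rewrite ltnn.
  split; apply/setP => s.
    by rewrite memD memT; apply/andP/idP => [[]//|h]; split => //; apply: vnot.
  rewrite memT join_mem //; apply/idP/idP => [h|/andP[vs h]]; last exact: (extend e_sym e_irr vs h).
  have vs := vnot s h; rewrite vs /=.
  case: (vsplit e_sym e_irr vs h) => // h1.
  by have := leq_trans h1 (leq_trans (alpha_mono e (subsetDl _ _)) H); rewrite ltnn.
- apply/setP => s; rewrite memD memTv; apply/andP/andP => [[vs h]|[vs h]].
    split => //; case: (vsplit e_sym e_irr vs h) => // h1.
    by have := leq_trans h1 (leq_trans (alpha_mono e (subsetDl _ _)) H); rewrite ltnn.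
  by split => //; apply: leq_trans h (monoT s).
- apply/setP => s; rewrite memD in_setU memTv join_mem //.
  apply/idP/idP => [/andP[vs h]|/orP[/andP[vs h]|/andP[vs h]]].
    by case: (vsplit e_sym e_irr vs h) => h1; rewrite vs h1 ?orbT.
    by rewrite vs; apply: leq_trans h (monoT s).
  by rewrite vs; apply: (extend e_sym e_irr vs h).
Qed.
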